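(* Let $\alpha\in\mathbb{Z}_{\ge 0}$ and let $I$ be a finitely generated graded right $A$-submodule of $Q_{\mathrm{gr}}(A)$ with structure constants $\{c_i\}$. Then for each $n\in\mathbb{Z}$: (1) there is a surjection $I\to X\langle n\rangle$ in $\operatorname{gr}A$ iff $c_{n-\alpha}\in\{1,\sigma^{n-\alpha}(z)\}$; (2) there is a surjection $I\to Y\langle n\rangle$ iff $c_n\in\{\sigma^n(z),\sigma^n(f)\}$; (3) if $\alpha>0$, there is a surjection $I\to Z\langle n\rangle$ iff $c_{n-\alpha}\in\{\sigma^{n-\alpha}(z+\alpha),\sigma^{n-\alpha}(f)\}$ and $c_n\in\{1,\sigma^n(z+\alpha)\}$.
   Context: $\Bbbk$ algebraically closed of characteristic $0$; $\sigma(z)=z+1$. $f=z(z+\alpha)$, $A=A(f)$ generated by $\Bbbk[z],x,y$ with $xz=(z+1)x$, $yz=(z-1)y$, $xy=f$, $yx=\sigma^{-1}(f)$, graded by $\deg x=1,\deg y=-1,\deg z=0$; $\operatorname{gr}A$ finitely generated graded right modules with degree-$0$ maps; $M\langle i\rangle_j=M_{j-i}$. If $\alpha=0$: $X=A/(xA+zA)$; if $\alpha>0$: $X=(A/(xA+(z+\alpha)A))\langle-\alpha\rangle$ and $Z=A/(y^\alpha A+xA+zA)$; in both cases $Y=(A/(yA+(z-1)A))\langle1\rangle$. $Q_{\mathrm{gr}}(A)=\Bbbk(z)[x,x^{-1};\sigma]$ is the graded quotient ring. A finitely generated graded right submodule $I\subseteq Q_{\mathrm{gr}}(A)$ has the form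 $\bigoplus_i\Bbbk[z]a_ix^i$ ($a_i\in\Bbbk(z)^\times$), and its structure constants are $c_i=a_ia_{i+1}^{-1}$ normalized monic; each $c_i\in\{1,\sigma^i(z),\sigma^i(z+\alpha),\sigma^i(f)\}$. *)

(* Defs.v *)
From HB Require Import structures.
From Stdlib Require Lists.List.
From mathcomp Require Import all_boot all_order all_algebra.
Set Implicit Arguments. Unset Strict Implicit. Unset Printing Implicit Defensive.
Import Order.TTheory GRing.Theory Num.Theory.
Local Open Scope ring_scope.

Notation "x %:F" := (@FracField.tofrac _ x) : ring_scope.

Section Defs.
Variable K : fieldType.

Definition sigp (i : int) (p : {poly K}) : {poly K} := p \Po ('X + (i%:~R)%:P).

Definition fpoly (al : nat) : {poly K} := 'X * ('X + (al%:R)%:P).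

(* A = A(f) is presented by generators z, x, y
   (k[z] is free on z) with the relations of the paper, so a graded right
   A-module is a family of k-vector spaces M_i (i : int) with k-linear maps
     .z : M_i -> M_i,  .x : M_i -> M_(i+1),  .y : M_(i+1) -> M_i
   satisfying the relations (see grmod_axioms).  To avoid dependent casts,
   .x and .y are given as families gx i j, gy i j : M_i -> M_j which are only
   ever used for j = i + 1 (resp. i = j + 1). *)
Record grmod := GrMod {
  gcar :> int -> lmodType K;
  gz : forall i, gcar i -> gcar i;
  gx : forall i j, gcar i -> gcar j;
  gy : forall i j, gcar i -> gcar j }.
Arguments gz {g} i _.
Arguments gx {g} i j _.
Arguments gy {g} i j _.

(* The module axioms (documentation: the concrete modules below satisfy them). *)
Definition grmod_axioms (al : nat) (M : grmod) : Prop :=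
  forall i : int,
  [/\ (forall (c : K) (u v : M i), gz i (c *: u + v) = c *: gz i u + gz i v)
      /\ (forall (c : K) (u v : M i), gx i (i + 1) (c *: u + v)
                                  = c *: gx i (i + 1) u + gx i (i + 1) v)
      /\ (forall (c : K) (u v : M (i + 1)), gy (i + 1) i (c *: u + v)
                                  = c *: gy (i + 1) i u + gy (i + 1) i v),
      (* x z = (z + 1) x *)
      forall u : M i, gz (i + 1) (gx i (i + 1) u) = gx i (i + 1) (gz i u + u),
      (* y z = (z - 1) y *)
      forall u : M (i + 1), gz i (gy (i + 1) i u) = gy (i + 1) i (gz (i + 1) u - u),
      (* x y = f = z (z + alpha) *)
      forall u : M i, gy (i + 1) i (gx i (i + 1) u) = gz i (gz i u + al%:R *: u)
    & (* y x = sigma^{-1}(f) = (z - 1)(z - 1 + alpha) *)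
      forall u : M (i + 1), gx i (i + 1) (gy (i + 1) i u)
                      = (let w := gz (i + 1) u - u in gz (i + 1) w + al%:R *: w)].

Definition grhom (M N : grmod) (phi : forall i, M i -> N i) : Prop :=
  [/\ forall i (c : K) (u v : M i), phi i (c *: u + v) = c *: phi i u + phi i v,
      forall i (u : M i), phi i (gz i u) = gz i (phi i u),
      forall i (u : M i), phi (i + 1) (gx i (i + 1) u) = gx i (i + 1) (phi i u)
    & forall i (u : M (i + 1)), phi i (gy (i + 1) i u) = gy (i + 1) i (phi (i + 1) u)].

Definition grsurj (M N : grmod) : Prop :=
  exists phi : forall i, M i -> N i,
    grhom phi /\ forall i (w : N i), exists u : M i, phi i u = w.

Definition shift (M : grmod) (n : int) : grmod :=
  @GrMod (fun j => M (j - n))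
         (fun j => @gz M (j - n))
         (fun i j => @gx M (i - n) (j - n))
         (fun i j => @gy M (i - n) (j - n)).

Definition grsubmod (M : grmod) (S : forall i, M i -> Prop) : Prop :=
  forall i,
  [/\ S i 0,
      forall (c : K) (u v : M i), S i u -> S i v -> S i (c *: u + v),
      forall u, S i u -> S i (gz i u),
      forall u, S i u -> S (i + 1) (gx i (i + 1) u)
    & forall u, S (i + 1) u -> S i (gy (i + 1) i u)].

Definition fingen (M : grmod) : Prop :=
  exists gens : seq {i : int & M i},
    forall S, grsubmod S ->
      (forall g, Stdlib.Lists.List.In g gens -> S (projT1 g) (projT2 g)) ->
      forall i (u : M i), S i u.

(* Modules concentrated in degrees { j | b j }, one-dimensional there,
   with basis vector e_j: e_j.z = j e_j, e_j.x = xc j e_(j+1),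
   e_j.y = yc j e_(j-1)  (e_j = 0 outside the support). *)
Definition tr (m n : nat) (v : 'rV[K]_m) : 'rV[K]_n :=
  v *m (const_mx 1 : 'M[K]_(m, n)).
Arguments tr {m n} v.

Definition strmod (b : int -> bool) (xc yc : int -> K) : grmod :=
  @GrMod (fun j => 'rV[K]_(b j : nat))
         (fun i v => i%:~R *: v)
         (fun i j v => if j == i + 1 then xc i *: tr v else 0)
         (fun i j v => if j == i - 1 then yc i *: tr v else 0).

(* X := A/(xA+zA) (alpha = 0), X := (A/(xA+(z+alpha)A))<-alpha> (alpha > 0):
   k-basis e_j = class of y^m in degree j = -alpha - m (m >= 0);
   y^m z = (z-m) y^m == j y^m, y^m y = y^(m+1), y^m x = sigma^{-m}(f) y^(m-1)
   == f(j) y^(m-1).  Both cases are given by one formula. *)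
Definition Xmod (al : nat) : grmod :=
  strmod (fun j => j <= - (al%:Z)) (fun j => (fpoly al).[j%:~R]) (fun _ => 1).

(* Y := (A/(yA+(z-1)A))<1>: basis class of x^m in degree j = m + 1 (m >= 0);
   x^m z == j x^m, x^m x = x^(m+1), x^m y = sigma^(m-1)(f) x^(m-1)
   == f(j-1) x^(m-1). *)
Definition Ymod (al : nat) : grmod :=
  strmod (fun j => 1 <= j) (fun _ => 1) (fun j => (fpoly al).[(j - 1)%:~R]).

(* Z := A/(y^alpha A + xA + zA) (alpha > 0): basis class of y^m, 0 <= m < alpha,
   in degree j = -m; y^m z == j y^m, y^m y = y^(m+1) (0 if m+1 = alpha),
   y^m x == f(j) y^(m-1). *)
Definition Zmod (al : nat) : grmod :=
  strmod (fun j => (- (al%:Z) < j) && (j <= 0))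
         (fun j => (fpoly al).[j%:~R]) (fun _ => 1).

(* Graded submodules I = (+)_i k[z] a_i x^i of Q_gr(A) = k(z)[x,x^-1;sigma]. *)

(* the polynomial represented by a fraction (meaningful when it is one) *)
Definition polyof (q : {fraction {poly K}}) : {poly K} :=
  (\n_(repr q)) %/ (\d_(repr q)).

(* I is a right A-submodule: a_i nonzero, I.x in I, I.y in I
   (I.z in I is automatic); y = sigma^{-1}(f) x^{-1} in Q_gr(A), so
   a_i x^i . y = a_i sigma^{i-1}(f) x^{i-1}. *)
Definition is_grsubQ (al : nat) (a : int -> {fraction {poly K}}) : Prop :=
  [/\ forall i, a i != 0,
      forall i, exists p : {poly K}, a i = p%:F * a (i + 1)
    & forall i, exists p : {poly K},
        a i * (sigp (i - 1) (fpoly al))%:F = p%:F * a (i - 1)].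

(* The module I, with I_j = k[z] a_j x^j identified with k[z] via p |-> p a_j x^j:
   (p a_j x^j) z = p sigma^j(z) a_j x^j,
   (p a_j x^j) x = (p a_j/a_(j+1)) a_(j+1) x^(j+1),
   (p a_j x^j) y = (p a_j sigma^(j-1)(f)/a_(j-1)) a_(j-1) x^(j-1). *)
Definition Imod (al : nat) (a : int -> {fraction {poly K}}) : grmod :=
  @GrMod (fun _ => {poly K})
    (fun i p => p * sigp i 'X)
    (fun i j p => if j == i + 1 then p * polyof (a i / a (i + 1)) else 0)
    (fun i j p => if j == i - 1 then
                    p * polyof (a i * (sigp (i - 1) (fpoly al))%:F / a (i - 1))
                  else 0).

Definition strc (a : int -> {fraction {poly K}}) (i : int) : {poly K} :=
  let r := polyof (a i / a (i + 1)) in (lead_coef r)^-1 *: r.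

End Defs.

(* Main.v *)
Require Import Defs.
From HB Require Import structures.
From mathcomp Require Import all_boot all_order all_algebra ring zify.
Import GRing.Theory.
Local Open Scope ring_scope.

Lemma polyofF (K : fieldType) (p : {poly K}) : polyof (p%:F) = p.
Proof.
rewrite /polyof; unlock FracField.tofrac.
have := FracField.equivf_l (Ratio p 1).
rewrite !numden_Ratio ?oner_eq0 // mulr1 => ->.
rewrite mulrC mulpK //.
exact: denom_ratioP.
Qed.

Section P.
Variable K : fieldType.
Implicit Types p q e m : {poly K}.
Local Notation N p := ((lead_coef p)^-1 *: p).

Lemma Nmonic (m : {poly K}) c : m \is monic -> c != 0 -> N (c *: m) = m.
Proof.
move=> /monicP hm c0; rewrite lead_coefZ hm mulr1 scalerA mulVf // scale1r //.
Qed.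

Lemma XsubC0 (s : K) : 'X - s%:P != 0. Proof. by rewrite polyXsubC_eq0. Qed.

Lemma size1_cancel p e m : size p = 1%N -> p * e = m ->
  p`_0 != 0 /\ e = (p`_0)^-1 *: m.
Proof.
move=> sp h.
have c0 : p`_0 != 0.
  have : p != 0 by rewrite -size_poly_eq0 sp.
  by rewrite [p]size1_polyC ?sp // polyC_eq0 coefC.
split => //; rewrite -h [p]size1_polyC ?sp // mul_polyC scalerA coefC /=.
by rewrite mulVf // scale1r.
Qed.

Lemma Nconst p : size p = 1%N -> N p = 1.
Proof.
move=> sp; have [c0 _] := @size1_cancel p 1 p sp (mulr1 p).
rewrite [p]size1_polyC ?sp // lead_coefC -mul_polyC -polyCM mulVf //.
Qed.

Lemma Nrecover p : p != 0 -> p = lead_coef p *: N p.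
Proof.
by move=> p0; rewrite scalerA divff ?scale1r // lead_coef_eq0.
Qed.

Lemma size_split p e (s : K) : p * e = 'X - s%:P ->
  (size p = 1%N /\ exists c, c != 0 /\ e = c *: ('X - s%:P)) \/
  (size e = 1%N /\ exists c, c != 0 /\ p = c *: ('X - s%:P)).
Proof.
move=> h.
have pe0 : p * e != 0 by rewrite h XsubC0.
have p0 : p != 0 by apply: contraNneq pe0 => ->; rewrite mul0r.
have e0 : e != 0 by apply: contraNneq pe0 => ->; rewrite mulr0.
have := size_mul p0 e0; rewrite h size_XsubC => hs.
have sp : (0 < size p)%N by rewrite size_poly_gt0.
have se : (0 < size e)%N by rewrite size_poly_gt0.
have [sp1|sp1] := eqVneq (size p) 1%N.
  left; split => //; have [c0 ->] := size1_cancel _ _ _ sp1 h.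
  by exists (p`_0)^-1; rewrite invr_eq0.
right; have se1 : size e = 1%N.
  move: hs sp1 sp se; case: (size p) => [|[|k]] //; case: (size e) => [|[|l]] //=.
  by rewrite !addnS.
split => //; rewrite mulrC in h; have [c0 ->] := size1_cancel _ _ _ se1 h.
by exists (e`_0)^-1; rewrite invr_eq0.
Qed.


Lemma L1 p q (r s : K) : p * q = ('X - r%:P) * ('X - s%:P) ->
  (root q r <-> N p = 1 \/ N p = 'X - s%:P).
Proof.
move=> h.
have pq0 : p * q != 0 by rewrite h mulf_neq0 // XsubC0.
have p0 : p != 0 by apply: contraNneq pq0 => ->; rewrite mul0r.
split.
  move/factor_theorem => [q' hq]; rewrite hq mulrA [_ * ('X - s%:P)]mulrC in h.
  move/(mulIf (XsubC0 r)): h => h.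
  case: (size_split _ _ _ h) => [[sp _]|[_ [c [c0 ->]]]].
    by left; apply: Nconst.
  by right; apply: Nmonic => //; apply: monicXsubC.
have lc0 : lead_coef p != 0 by rewrite lead_coef_eq0.
have hp := Nrecover _ p0.
case=> E; rewrite E in hp; rewrite hp in h.
  move: h; rewrite -mul_polyC mulr1 => /(congr1 (horner^~ r)).
  rewrite hornerM hornerC !hornerE subrr mul0r => /eqP.
  by rewrite mulf_eq0 (negbTE lc0).
move: h; rewrite -scalerAl -mul_polyC => h.
have {h} : (lead_coef p)%:P * q * ('X - s%:P) = ('X - r%:P) * ('X - s%:P).
  by rewrite -h -!mulrA [q * _]mulrC.
move=> /(mulIf (XsubC0 s)).
move=> /(congr1 (horner^~ r)); rewrite hornerM hornerC !hornerE subrr => /eqP.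
by rewrite mulf_eq0 (negbTE lc0).
Qed.

Lemma L2 p q (r s : K) : p * q = ('X - r%:P) * ('X - s%:P) ->
  (root p r <-> N p = 'X - r%:P \/ N p = ('X - r%:P) * ('X - s%:P)).
Proof.
move=> h.
have pq0 : p * q != 0 by rewrite h mulf_neq0 // XsubC0.
have p0 : p != 0 by apply: contraNneq pq0 => ->; rewrite mul0r.
split.
  move/factor_theorem => [e he].
  have {h} : e * q * ('X - r%:P) = ('X - s%:P) * ('X - r%:P).
    by rewrite [X in _ = X]mulrC -h he mulrAC.
  move/(mulIf (XsubC0 r)) => h.
  case: (size_split _ _ _ h) => [[se _]|[_ [c [c0 hc]]]].
    have [c1 ee] := @size1_cancel e 1 e se (mulr1 e).
    rewrite he [e]size1_polyC ?se // mul_polyC.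
    by left; apply: Nmonic => //; apply: monicXsubC.
  by right; rewrite he hc -scalerAl mulrC; apply: Nmonic => //; rewrite monicMl monicXsubC.
have lc0 : lead_coef p != 0 by rewrite lead_coef_eq0.
have hp := Nrecover _ p0.
case=> E; rewrite E in hp; rewrite /root hp hornerZ ?hornerM hornerXsubC subrr ?mul0r mulr0 //.
Qed.
End P.

Section M.
Variable K : fieldType.

Lemma rv0 (b : bool) (v : 'rV[K]_b) : ~~ b -> v = 0.
Proof. by case: b v => //= v _; rewrite thinmx0. Qed.

Lemma rv_eq (b : bool) (v w : 'rV[K]_b) : ~~ b -> v = w.
Proof. by move=> nb; rewrite (rv0 _ v nb) (rv0 _ w nb). Qed.

Lemma tr0 (b b' : bool) (v : 'rV[K]_b) : ~~ b -> tr b' v = 0.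
Proof. by move=> nb; rewrite (rv0 _ v nb) /tr mul0mx. Qed.

Lemma trZ (m k : nat) (c : K) (v : 'rV[K]_m) : tr k (c *: v) = c *: tr k v.
Proof. by rewrite /tr scalemxAl. Qed.

Lemma tr_const (b b' : bool) :
  tr b' (const_mx 1 : 'rV[K]_b) = (b%:R : K) *: const_mx 1.
Proof.
case: b; last by rewrite tr0 // scale0r.
apply/matrixP => i j; rewrite !mxE big_ord1 !mxE mulr1 //.
Qed.

Lemma rv_span (b : bool) (w : 'rV[K]_b) : exists k, w = k *: const_mx 1.
Proof.
case: b w => w; last by exists 0; apply: rv_eq.
exists (w ord0 ord0); apply/matrixP => i j; rewrite !mxE mulr1.
by rewrite !ord1.
Qed.

Lemma rv_nz (b : bool) : b -> (const_mx 1 : 'rV[K]_b) != 0.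
Proof.
case: b => // _; apply/eqP => /matrixP /(_ ord0 ord0); rewrite !mxE.
by move/eqP; rewrite oner_eq0.
Qed.


Section H.
Variables (al : nat) (a : int -> {fraction {poly K}}) (n : int)
  (b : int -> bool) (xc yc : int -> K).
Local Notation T := (shift (strmod b xc yc) n).
Local Notation I := (Imod al a).
Local Notation r := (- (n%:~R) : K).

Lemma sigpX (j : int) : sigp j 'X = 'X + (j%:~R)%:P :> {poly K}.
Proof. by rewrite /sigp comp_polyX. Qed.

Lemma phi0 (phi : forall i, I i -> T i) : grhom phi -> forall j, phi j 0 = 0.
Proof.
case=> hl _ _ _ j; have := hl j 1 0 0; rewrite !scale1r addr0 => h.
apply: (@addrI _ (phi j 0)); by rewrite addr0 -h.
Qed.

Lemma ev_phi (phi : forall i, I i -> T i) : grhom phi ->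
  forall j (u q : {poly K}), phi j (u * q) = q.[r] *: phi j u.
Proof.
move=> hphi; have [hl hz _ _] := hphi.
move=> j.
have H0 : forall v : {poly K}, phi j (v * ('X - r%:P)) = 0.
  move=> v.
  have -> : v * ('X - r%:P) = (- ((j%:~R : K) - n%:~R)) *: v + v * sigp j 'X.
    rewrite sigpX -mul_polyC !(polyCN, polyCB); ring.
  rewrite hl hz /= -scalerDl rmorphB /= addNr scale0r //.
move=> u q.
have : root (q - (q.[r])%:P) r by rewrite /root !hornerE subrr.
case/factor_theorem => s hs.
have -> : u * q = q.[r] *: u + (u * s) * ('X - r%:P).
  by rewrite -mulrA -hs -mul_polyC; ring.
by rewrite hl H0 addr0.
Qed.

Lemma conv_y (phi : forall i, I i -> T i) : grhom phi ->
  (forall i (w : T i), exists u : I i, phi i u = w) ->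
  forall j, b (j - n) -> ~~ b (j + 1 - n) ->
  (polyof (a (j + 1) * (sigp (j + 1 - 1) (fpoly K al))%:F / a (j + 1 - 1))).[r] = 0.
Proof.
move=> hphi hs j bj nbj.
have [_ _ _ hy] := hphi.
have [u hu] := hs j (const_mx 1).
have := hy j u => /=.
rewrite (_ : (j == j + 1 - 1) = true); last by rewrite addrK eqxx.
rewrite ev_phi //.
rewrite tr0 // scaler0 if_same hu => /eqP.
by rewrite scaler_eq0 (negbTE (rv_nz _ bj)) orbF => /eqP.
Qed.

Lemma conv_x (phi : forall i, I i -> T i) : grhom phi ->
  (forall i (w : T i), exists u : I i, phi i u = w) ->
  forall j, ~~ b (j - n) -> b (j + 1 - n) ->
  (polyof (a j / a (j + 1))).[r] = 0.
Proof.
move=> hphi hs j nbj bj.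
have [_ _ hx _] := hphi.
have [u hu] := hs (j + 1) (const_mx 1).
have := hx j u => /=.
rewrite eqxx ev_phi //.
rewrite tr0 // scaler0 if_same hu => /eqP.
by rewrite scaler_eq0 (negbTE (rv_nz _ bj)) orbF => /eqP.
Qed.


Lemma surj_gen (lam : int -> K) :
  (forall j, b (j + 1 - n) ->
     lam (j + 1) * (polyof (a j / a (j + 1))).[r]
     = xc (j - n) * ((b (j - n))%:R * lam j)) ->
  (forall j, b (j - n) ->
     lam j * (polyof (a (j + 1) * (sigp (j + 1 - 1) (fpoly K al))%:F
                      / a (j + 1 - 1))).[r]
     = yc (j + 1 - n) * ((b (j + 1 - n))%:R * lam (j + 1))) ->
  (forall j, b (j - n) -> lam j != 0) ->
  grsurj I T.
Proof.
move=> Hx Hy Hn.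
exists (fun j (u : I j) => ((lam j * u.[r]) *: const_mx 1 : T j)).
split; first split.
- move=> i c u v /=.
  by rewrite hornerD hornerZ mulrDr scalerDl mulrCA scalerA.
- move=> i u /=.
  rewrite sigpX hornerM hornerD hornerX hornerC scalerA; congr (_ *: _).
  rewrite rmorphB /=; ring.
- move=> i u /=.
  rewrite eqxx (_ : (i + 1 - n == i - n + 1) = true); last by rewrite addrAC eqxx.
  have [bi|nbi] := boolP (b (i + 1 - n)); last by apply: rv_eq.
  rewrite trZ tr_const !scalerA hornerM; congr (_ *: _).
  have e := Hx i bi.
  rewrite mulrCA e; ring.
- move=> i u /=.
  rewrite (_ : (i == i + 1 - 1) = true); last by rewrite addrK eqxx.
  rewrite (_ : (i - n == i + 1 - n - 1) = true); last by rewrite addrAC addrK eqxx.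
  have [bi|nbi] := boolP (b (i - n)); last by apply: rv_eq.
  rewrite trZ tr_const !scalerA hornerM; congr (_ *: _).
  have e := Hy i bi.
  rewrite mulrCA e; ring.
- move=> i w /=.
  have [k ->] := rv_span _ w.
  have [bi|nbi] := boolP (b (i - n)); last by exists 0; apply: rv_eq.
  exists ((k / lam i)%:P); rewrite hornerC mulrC divfK //; exact: Hn.
Qed.
End H.
End M.


Section Main.
Variable K : fieldType.
Hypothesis hK : [pchar K] =i pred0.
Variables (al : nat) (a : int -> {fraction {poly K}}) (n : int).
Hypothesis hI : is_grsubQ al a.
Local Notation r := (- (n%:~R) : K).
Local Notation f := (fpoly K al).
Local Notation P i := (polyof (a i / a (i + 1))).
Local Notation Qy i := (polyof (a (i + 1) * (sigp (i + 1 - 1) f)%:F / a (i + 1 - 1))).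

Lemma intr_nz (t : int) : t != 0 -> (t%:~R : K) != 0.
Proof.
move/pcharf0P: hK => h.
case: t => k /=; first by rewrite h.
by rewrite NegzE rmorphN oppr_eq0 /= h.
Qed.

Lemma PQ i : P i * Qy i = sigp i f.
Proof.
have [hne hp hq] := hI.
have [p hp'] := hp i; have [q hq'] := hq (i + 1).
rewrite addrK in hq'; rewrite addrK.
have eP : a i / a (i + 1) = p%:F by rewrite hp' mulfK ?hne.
have eQ : a (i + 1) * (sigp i f)%:F / a i = q%:F by rewrite hq' mulfK ?hne.
rewrite eP eQ !polyofF.
apply/eqP; rewrite -tofrac_eq tofracM; apply/eqP.
apply: (mulIf (hne (i + 1))).
by rewrite mulrAC -hp' mulrC -hq' mulrC.
Qed.

Lemma sigf i : sigp i f = ('X - (- (i%:~R))%:P) * ('X - (- (i%:~R) - al%:R)%:P).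
Proof.
rewrite /sigp /fpoly comp_polyM comp_polyD comp_polyX comp_polyC.
rewrite !(polyCD, polyCN); ring.
Qed.

Lemma sigfev i : (sigp i f).[r] = ((i - n) * (i - n + al%:Z))%:~R.
Proof.
rewrite /sigp horner_comp /fpoly !(hornerM, hornerD, hornerX, hornerC).
ring.
Qed.

Lemma fev (t : int) : f.[t%:~R] = (t * (t + al%:Z))%:~R.
Proof.
rewrite /fpoly !(hornerM, hornerD, hornerX, hornerC).
rewrite rmorphM /= rmorphD /=; ring.
Qed.

Lemma PQev i : (P i).[r] * (Qy i).[r] = ((i - n) * (i - n + al%:Z))%:~R.
Proof. by rewrite -hornerM PQ sigfev. Qed.

Lemma PQnz i : i - n != 0 -> i - n + al%:Z != 0 ->
  (P i).[r] != 0 /\ (Qy i).[r] != 0.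
Proof.
move=> h1 h2.
have : (P i).[r] * (Qy i).[r] != 0 by rewrite PQev intr_nz // mulf_neq0.
by rewrite mulf_eq0 negb_or => /andP.
Qed.

End Main.

Fixpoint ldown {K : fieldType} (g : int -> K) (m : int) (k : nat) : K :=
  if k is k'.+1 then ldown g m k' / g (m - (k'.+1)%:Z) else 1.
Fixpoint lup {K : fieldType} (g : int -> K) (m : int) (k : nat) : K :=
  if k is k'.+1 then lup g m k' / g (m + k'%:Z) else 1.

Lemma ldown_step (K : fieldType) (g : int -> K) m j : j < m ->
  ldown g m (absz (m - j)%R) = ldown g m (absz (m - (j + 1))%R) / g j.
Proof.
move=> h.
have -> : absz (m - j)%R = (absz (m - (j + 1))%R).+1 by lia.
by rewrite /= (_ : m - ((absz (m - (j + 1))%R).+1)%:Z = j) //; lia.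
Qed.

Lemma ldown_nz (K : fieldType) (g : int -> K) m j : j <= m ->
  (forall j', j <= j' -> j' < m -> g j' != 0) -> ldown g m (absz (m - j)%R) != 0.
Proof.
move=> h hg.
have : forall k, (k <= absz (m - j)%R)%N -> ldown g m k != 0.
  elim=> [|k IH] hk /=; first exact: oner_neq0.
  rewrite mulf_neq0 ?IH ?invr_eq0 //; first lia.
  apply: hg; lia.
by apply.
Qed.

Lemma lup_step (K : fieldType) (g : int -> K) m j : m <= j ->
  lup g m (absz (j + 1 - m)%R) = lup g m (absz (j - m)%R) / g j.
Proof.
move=> h.
have -> : absz (j + 1 - m)%R = (absz (j - m)%R).+1 by lia.
by rewrite /= (_ : m + (absz (j - m)%R)%:Z = j) //; lia.
Qed.

Lemma lup_nz (K : fieldType) (g : int -> K) m j : m <= j ->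
  (forall j', m <= j' -> j' < j -> g j' != 0) -> lup g m (absz (j - m)%R) != 0.
Proof.
move=> h hg.
have : forall k, (k <= absz (j - m)%R)%N -> lup g m k != 0.
  elim=> [|k IH] hk /=; first exact: oner_neq0.
  rewrite mulf_neq0 ?IH ?invr_eq0 //; first lia.
  apply: hg; lia.
by apply.
Qed.

Section Cases.
Variable K : fieldType.
Hypothesis hK : [pchar K] =i pred0.
Variables (al : nat) (a : int -> {fraction {poly K}}) (n : int).
Hypothesis hI : is_grsubQ al a.
Local Notation r := (- (n%:~R) : K).
Local Notation f := (fpoly K al).
Local Notation P i := (polyof (a i / a (i + 1))).
Local Notation Qy i := (polyof (a (i + 1) * (sigp (i + 1 - 1) f)%:F / a (i + 1 - 1))).
Local Notation N p := ((lead_coef p)^-1 *: p).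
Local Notation m := (n - al%:Z).

Lemma caseX :
  grsurj (Imod al a) (shift (Xmod K al) n) <->
  (strc a m = 1 \/ strc a m = sigp m 'X).
Proof.
have hprod : P m * Qy m = ('X - r%:P) * ('X - (- (m%:~R))%:P).
  rewrite PQ // sigf mulrC; congr (_ * _); congr ('X - _%:P).
  rewrite rmorphB /=; ring.
have E1 : (sigp m 'X : {poly K}) = 'X - (- (m%:~R))%:P by rewrite sigpX polyCN opprK.
suff -> : grsurj (Imod al a) (shift (Xmod K al) n) <-> root (Qy m) r.
  by rewrite /strc /= E1; exact: L1 hprod.
split.
  case=> phi [hphi hs]; apply/eqP.
  apply: (@conv_y K al a n (fun j => j <= - al%:Z) _ _ phi hphi hs) => /=; lia.
move=> /eqP hr.
apply: (@surj_gen _ al a n _ _ _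
          (fun j => ldown (fun j => (Qy j).[r]) m (absz (m - j)%R))) => /=.
- move=> j hj.
  have hjm : j < m by lia.
  have [_ hQ] := @PQnz K hK al a n hI j ltac:(lia) ltac:(lia).
  rewrite (_ : (j - n <= - al%:Z) = true); last by lia.
  rewrite (@ldown_step _ _ _ _ hjm) fev -(@PQev K al a n hI).
  rewrite /= mulr1n mul1r; field; exact: hQ.
- move=> j hj.
  have [->|hne] := eqVneq j m.
    rewrite hr mulr0 (_ : (m + 1 - n <= - al%:Z) = false); last by lia.
    by rewrite mul0r mulr0.
  have hjm : j < m by lia.
  have [_ hQ] := @PQnz K hK al a n hI j ltac:(lia) ltac:(lia).
  rewrite (_ : (j + 1 - n <= - al%:Z) = true); last by lia.
  rewrite (@ldown_step _ _ _ _ hjm).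
  rewrite /= mulr1n mul1r; field; exact: hQ.
- move=> j hj; apply: ldown_nz; first lia.
  move=> j' h1 h2; have [_ hQ] := @PQnz K hK al a n hI j' ltac:(lia) ltac:(lia).
  exact: hQ.
Qed.


Lemma caseY :
  grsurj (Imod al a) (shift (Ymod K al) n) <->
  (strc a n = sigp n 'X \/ strc a n = sigp n f).
Proof.
have hprod : P n * Qy n = ('X - r%:P) * ('X - (- (n%:~R) - al%:R)%:P).
  by rewrite PQ // sigf.
have E1 : (sigp n 'X : {poly K}) = 'X - r%:P by rewrite sigpX polyCN opprK.
suff -> : grsurj (Imod al a) (shift (Ymod K al) n) <-> root (P n) r.
  by rewrite /strc /= E1 sigf; exact: L2 _ _ _ _ _ hprod.
split.
  case=> phi [hphi hs]; apply/eqP.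
  apply: (@conv_x K al a n (fun j => 1 <= j) _ _ phi hphi hs) => /=; lia.
move=> /eqP hr.
apply: (@surj_gen _ al a n _ _ _
          (fun j => lup (fun j => (P j).[r]) (n + 1) (absz (j - (n + 1))%R))) => /=.
- move=> j hj.
  have [->|hne] := eqVneq j n.
    rewrite hr mulr0 (_ : (1 <= n - n) = false); last by lia.
    by rewrite mul0r mulr0.
  have hjn : n + 1 <= j by lia.
  have [hP _] := @PQnz K hK al a n hI j ltac:(lia) ltac:(lia).
  rewrite (_ : (1 <= j - n) = true); last by lia.
  rewrite (@lup_step _ _ _ _ hjn).
  rewrite /= mulr1n !mul1r; field; exact: hP.
- move=> j hj.
  have hjn : n + 1 <= j by lia.
  have [hP _] := @PQnz K hK al a n hI j ltac:(lia) ltac:(lia).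
  rewrite (_ : (1 <= j + 1 - n) = true); last by lia.
  rewrite (_ : j + 1 - n - 1 = j - n); last by lia.
  rewrite (@lup_step _ _ _ _ hjn) fev -(@PQev K al a n hI).
  rewrite /= mulr1n mul1r; field; exact: hP.
- move=> j hj; apply: lup_nz; first lia.
  move=> j' h1 h2; have [hP _] := @PQnz K hK al a n hI j' ltac:(lia) ltac:(lia).
  exact: hP.
Qed.

Lemma caseZ : (0 < al)%N ->
  (grsurj (Imod al a) (shift (Zmod K al) n) <->
   ((strc a m = sigp m ('X + (al%:R)%:P) \/ strc a m = sigp m f)
    /\ (strc a n = 1 \/ strc a n = sigp n ('X + (al%:R)%:P)))).
Proof.
move=> al0.
have E4 : sigp m f = ('X - r%:P) * ('X - (- (m%:~R))%:P).
  rewrite sigf mulrC; congr (_ * _); congr ('X - _%:P); ring.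
have hprod : P m * Qy m = ('X - r%:P) * ('X - (- (m%:~R))%:P).
  by rewrite PQ // E4.
have hprodn : P n * Qy n = ('X - r%:P) * ('X - (- (n%:~R) - al%:R)%:P).
  by rewrite PQ // sigf.
have E3 : (sigp m ('X + (al%:R)%:P) : {poly K}) = 'X - r%:P.
  rewrite /sigp comp_polyD comp_polyX comp_polyC polyCN opprK -addrA -polyCD.
  congr ('X + _%:P); ring.
have E5 : (sigp n ('X + (al%:R)%:P) : {poly K}) = 'X - (- (n%:~R) - al%:R)%:P.
  rewrite /sigp comp_polyD comp_polyX comp_polyC -addrA -polyCD -polyCN.
  congr ('X + _%:P); ring.
have A := L2 _ _ _ _ _ hprod; have B := L1 _ _ _ _ _ hprodn.
suff -> : grsurj (Imod al a) (shift (Zmod K al) n) <-> (root (P m) r /\ root (Qy n) r).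
  rewrite /strc /= E3 E4 E5.
  by split=> -[h1 h2]; split; [exact: A.1|exact: B.1|exact: A.2|exact: B.2].
split.
  case=> phi [hphi hs]; split; apply/eqP.
    apply: (@conv_x K al a n (fun j => (- (al%:Z) < j) && (j <= 0)) _ _ phi hphi hs) => /=.
      by apply/negP => /andP [h1 h2]; lia.
    by apply/andP; split; lia.
  apply: (@conv_y K al a n (fun j => (- (al%:Z) < j) && (j <= 0)) _ _ phi hphi hs) => /=.
    by apply/andP; split; lia.
  by apply/negP => /andP [h1 h2]; lia.
case=> /eqP hP0 /eqP hQ0.
apply: (@surj_gen _ al a n _ _ _
          (fun j => ldown (fun j => (Qy j).[r]) n (absz (n - j)%R))) => /=.
- move=> j /andP [h1 h2].
  have [->|hne] := eqVneq j m.
    rewrite hP0 mulr0 (_ : (- (al%:Z) < m - n) && (m - n <= 0) = false).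
      by rewrite mul0r mulr0.
    by apply/negP => /andP [h3 h4]; lia.
  have hjn : j < n by lia.
  have [_ hQ] := @PQnz K hK al a n hI j ltac:(lia) ltac:(lia).
  rewrite (_ : (- (al%:Z) < j - n) && (j - n <= 0) = true); last first.
    by apply/andP; split; lia.
  rewrite (@ldown_step _ _ _ _ hjn) fev -(@PQev K al a n hI).
  rewrite /= mulr1n mul1r; field; exact: hQ.
- move=> j /andP [h1 h2].
  have [->|hne] := eqVneq j n.
    rewrite hQ0 mulr0 (_ : (- (al%:Z) < n + 1 - n) && (n + 1 - n <= 0) = false).
      by rewrite mul0r mulr0.
    by apply/negP => /andP [h3 h4]; lia.
  have hjn : j < n by lia.
  have [_ hQ] := @PQnz K hK al a n hI j ltac:(lia) ltac:(lia).
  rewrite (_ : (- (al%:Z) < j + 1 - n) && (j + 1 - n <= 0) = true); last first.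
    by apply/andP; split; lia.
  rewrite (@ldown_step _ _ _ _ hjn).
  rewrite /= mulr1n !mul1r; field; exact: hQ.
- move=> j /andP [h1 h2]; apply: ldown_nz; first lia.
  move=> j' h3 h4; have [_ hQ] := @PQnz K hK al a n hI j' ltac:(lia) ltac:(lia).
  exact: hQ.
Qed.

End Cases.

Theorem lemma3p5 (K : closedFieldType) (hK : [pchar K] =i pred0) (al : nat)
    (a : int -> {fraction {poly K}}) (hI : is_grsubQ al a)
    (hfg : fingen (Imod al a)) (n : int) :
  let c := strc a in
  [/\ grsurj (Imod al a) (shift (Xmod K al) n) <->
        (c (n - al%:Z) = 1 \/ c (n - al%:Z) = sigp (n - al%:Z) 'X),
      grsurj (Imod al a) (shift (Ymod K al) n) <->
        (c n = sigp n 'X \/ c n = sigp n (fpoly K al))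
    & (0 < al)%N ->
      (grsurj (Imod al a) (shift (Zmod K al) n) <->
        ((c (n - al%:Z) = sigp (n - al%:Z) ('X + (al%:R)%:P)
          \/ c (n - al%:Z) = sigp (n - al%:Z) (fpoly K al))
         /\ (c n = 1 \/ c n = sigp n ('X + (al%:R)%:P))))].
Proof.
move=> c; split.
- exact: (@caseX K hK al a n hI).
- exact: (@caseY K hK al a n hI).
- exact: (@caseZ K hK al a n hI).
Qed.
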